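(* Let $q$ be a prime power and $n\in\{q-1,q,q+1\}$. Then any two linear $(n,q^{n-2},3)_q$ codes over $\mathbb{F}_q$ are equivalent.
   Context: An $(n,M,d)_q$ code over $\mathbb{F}_q$ is a subset of $\mathbb{F}_q^n$ with $M$ elements and minimum Hamming distance $d$; it is linear if it is an $\mathbb{F}_q$-subspace. Two codes of length $n$ are equivalent if one can be obtained from the other by a permutation of the coordinates followed by a permutation of the symbols of $\mathbb{F}_q$ in each coordinate separately (possibly different permutations in different coordinates). *)

(* Defs.v *)
From HB Require Import structures.
From mathcomp Require Import all_boot all_order all_algebra all_fingroup.
Set Implicit Arguments. Unset Strict Implicit. Unset Printing Implicit Defensive.
Import GRing.Theory.
Local Open Scope ring_scope.

Definition hamming (F : finFieldType) (n : nat) (x y : 'rV[F]_n) : nat :=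
  #|[set i : 'I_n | x 0 i != y 0 i]|.

Definition min_dist (F : finFieldType) (n : nat) (C : {set 'rV[F]_n}) (d : nat) : Prop :=
  (exists x y, [/\ x \in C, y \in C, x != y & hamming x y = d]) /\
  (forall x y, x \in C -> y \in C -> x != y -> (d <= hamming x y)%N).

Definition linear_code (F : finFieldType) (n : nat) (C : {set 'rV[F]_n}) : Prop :=
  [/\ 0 \in C,
      (forall x y, x \in C -> y \in C -> x + y \in C) &
      (forall (a : F) x, x \in C -> a *: x \in C)].

Definition is_code (F : finFieldType) (n : nat) (C : {set 'rV[F]_n}) (M d : nat) : Prop :=
  #|C| = M /\ min_dist C d.

Definition code_equiv (F : finFieldType) (n : nat) (C1 C2 : {set 'rV[F]_n}) : Prop :=
  exists (s : 'S_n) (pi : 'I_n -> {perm F}),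
    C2 = [set (\row_i (pi i) (x 0 (s i)) : 'rV[F]_n) | x : 'rV[F]_n in C1].

(* Main.v *)
Require Import Defs.
From HB Require Import structures.
From mathcomp Require Import all_boot all_order all_algebra all_fingroup.
From mathcomp Require Import ring zify.
Import GRing.Theory.
Local Open Scope ring_scope.

Section Pairs.
Set Implicit Arguments. Unset Strict Implicit.
Variable F : finFieldType.
Implicit Types u v w p r : F * F.

Definition det2 u v := u.1 * v.2 - u.2 * v.1.
Definition mapA (A : F * F * F * F) v :=
  (A.1.1.1 * v.1 + A.1.2 * v.2, A.1.1.2 * v.1 + A.2 * v.2).
Definition detA (A : F * F * F * F) := A.1.1.1 * A.2 - A.1.1.2 * A.1.2.

Lemma det2C u v : det2 u v = - det2 v u.
Proof. rewrite /det2; ring. Qed.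

Lemma det2uu u : det2 u u = 0.
Proof. rewrite /det2; ring. Qed.

Lemma det2_mapA A u v : det2 (mapA A u) (mapA A v) = detA A * det2 u v.
Proof. case: A => [[[a b] c] d]; rewrite /det2 /mapA /detA /=; ring. Qed.

Lemma det2_trans u v w : u != (0,0) -> det2 u v = 0 -> det2 u w = 0 -> det2 v w = 0.
Proof.
case: u => u1 u2; case: v => v1 v2; case: w => w1 w2; rewrite /det2 /= => nz e1 e2.
have H1 : u1 * (v1 * w2 - v2 * w1) = - (u1 * v2 - u2 * v1) * w1 + (u1 * w2 - u2 * w1) * v1 by ring.
have H2 : u2 * (v1 * w2 - v2 * w1) = - (u1 * v2 - u2 * v1) * w2 + (u1 * w2 - u2 * w1) * v2 by ring.
rewrite e1 e2 oppr0 !mul0r addr0 in H1 H2.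
have [u10|u1n0] := eqVneq u1 0.
  have u2n0 : u2 != 0 by apply: contraNneq nz => ->; rewrite u10.
  by move/eqP: H2; rewrite mulf_eq0 (negbTE u2n0) => /eqP.
by move/eqP: H1; rewrite mulf_eq0 (negbTE u1n0) => /eqP.
Qed.

Lemma mapA_nz A v : detA A != 0 -> v != (0,0) -> mapA A v != (0,0).
Proof.
case: A => [[[a b] c] d]; case: v => v1 v2; rewrite /mapA /detA /= => hD nz.
apply: contraNneq nz => -[e1 e2].
have H1 : (a * d - b * c) * v1 = d * (a * v1 + c * v2) - c * (b * v1 + d * v2) by ring.
have H2 : (a * d - b * c) * v2 = a * (b * v1 + d * v2) - b * (a * v1 + c * v2) by ring.
rewrite e1 e2 !mulr0 subr0 in H1 H2.
move/eqP: H1; rewrite mulf_eq0 (negbTE hD) => /eqP ->.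
by move/eqP: H2; rewrite mulf_eq0 (negbTE hD) => /eqP ->.
Qed.

(* projective normalisation *)
Definition normp v : F * F := if v.1 != 0 then (1, v.2 / v.1) else (0, 1).
Definition Pn : {set F * F} := [set p | (p.1 == 1) || (p == (0,1))].

Lemma normp_Pn v : normp v \in Pn.
Proof. by rewrite /normp inE; case: ifP => _ /=; rewrite ?eqxx ?orbT. Qed.

Lemma Pn_nz p : p \in Pn -> p != (0,0).
Proof.
rewrite inE => /orP[/eqP h|/eqP ->]; last by rewrite xpair_eqE eqxx oner_eq0.
by apply/eqP => e; move: h; rewrite e /= => /eqP; rewrite eq_sym oner_eq0.
Qed.

Lemma det2_normp v : v != (0,0) -> det2 (normp v) v = 0.
Proof.
case: v => v1 v2; rewrite /normp /det2 /=.
case: ifP => [h|/negbFE/eqP ->] nz /=; first by field.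
by ring.
Qed.

Lemma Pn_uniq p v : p \in Pn -> v != (0,0) -> det2 p v = 0 -> p = normp v.
Proof.
case: p => p1 p2; case: v => v1 v2; rewrite inE /det2 /normp /= => /orP[/eqP->|].
  move=> nz e. have [v10|v1n0] := eqVneq v1 0.
    by move: nz e; rewrite v10 mulr0 subr0 mul1r => /negP nz e; exfalso; apply: nz; rewrite e.
  have -> : v2 = p2 * v1 by move/eqP: e; rewrite mul1r subr_eq0 => /eqP.
  by rewrite /=; congr pair; field.
case/eqP => -> -> nz.
rewrite mul0r sub0r mul1r => /eqP; rewrite oppr_eq0 => /eqP ->.
by rewrite eqxx.
Qed.

Lemma prop_of_dep v w : v != (0,0) -> det2 v w = 0 ->
  w = ((if v.1 != 0 then w.1 / v.1 else w.2 / v.2) * v.1,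
       (if v.1 != 0 then w.1 / v.1 else w.2 / v.2) * v.2).
Proof.
case: v => v1 v2; case: w => w1 w2; rewrite /det2 /= => nz e.
case: ifP => [h|/negbFE/eqP v10].
  have -> : w2 = w1 * v2 / v1.
    by move/eqP: e; rewrite subr_eq0 => /eqP e; apply/(mulIf h); rewrite mulrC e; field.
  by congr pair; field.
have v2n0 : v2 != 0 by apply: contraNneq nz => ->; rewrite v10.
have -> : w1 = 0.
  move/eqP: e; rewrite v10 mul0r sub0r oppr_eq0 mulf_eq0 (negbTE v2n0) /=.
  by move/eqP.
by rewrite v10 /= mulr0 divfK.
Qed.

Lemma mapA_two p r p' r' : det2 p r != 0 -> det2 p' r' != 0 ->
  exists A, [/\ detA A != 0, mapA A p = p' & mapA A r = r'].
Proof.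
case: p => p1 p2; case: r => r1 r2; case: p' => s1 s2; case: r' => t1 t2.
rewrite /det2 /= => hD hD'.
set D := p1 * r2 - p2 * r1.
exists ((s1 * r2 - t1 * p2) / D, (s2 * r2 - t2 * p2) / D,
        (p1 * t1 - r1 * s1) / D, (p1 * t2 - r1 * s2) / D).
rewrite /detA /mapA /=; split.
- have -> : (s1 * r2 - t1 * p2) / D * ((p1 * t2 - r1 * s2) / D) -
     (s2 * r2 - t2 * p2) / D * ((p1 * t1 - r1 * s1) / D) = (s1 * t2 - s2 * t1) / D.
    by rewrite /D; field.
  by rewrite mulf_neq0 // invr_eq0.
- by congr pair; rewrite /D; field.
- by congr pair; rewrite /D; field.
Qed.

Lemma complete p : p != (0,0) -> exists r, det2 p r != 0.
Proof.
case: p => p1 p2 nz; have [p10|p1n0] := eqVneq p1 0.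
  exists (1,0); rewrite /det2 /= p10 mulr0 sub0r mulr1 oppr_eq0.
  by apply: contraNneq nz => ->; rewrite p10.
by exists (0,1); rewrite /det2 /= mulr1 mulr0 subr0.
Qed.

Lemma card_Pn : #|Pn| = #|F|.+1.
Proof.
have -> : Pn = (0,1) |: [set (1, t) | t : F].
  apply/setP => -[x y]; rewrite !inE /=.
  apply/idP/idP.
    case/orP => [/eqP ->|->]; last by [].
    by rewrite orbC; apply/orP; left; apply/imsetP; exists y.
  case/orP => [->|/imsetP [t _ [-> _]]]; first by rewrite orbT.
  by rewrite eqxx.
rewrite cardsU1 card_imset; last by move=> a b [].
have -> : (((0, 1) : F * F) \notin [set ((1 : F), t) | t in F]).
  by apply/negP => /imsetP [t _ [] /esym/eqP]; rewrite oner_eq0.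
by [].
Qed.

Definition Uset n (h : 'I_n -> F * F) : {set F * F} :=
  [set p in Pn | [forall i, det2 p (h i) != 0]].
Definition indep n (h : 'I_n -> F * F) :=
  (forall i, h i != (0,0)) /\ (forall i j, i != j -> det2 (h i) (h j) != 0).

Lemma card_U n (h : 'I_n -> F * F) : indep h -> #|Uset h| = (#|F|.+1 - n)%N.
Proof.
move=> [hnz hind].
pose im := [set normp (h i) | i in 'I_n].
have him : #|im| = n.
  rewrite card_imset ?card_ord // => i j e.
  apply/eqP; apply: contraTT isT => nij.
  have := hind _ _ nij; apply: contraNN => _; apply/eqP.
  apply: (@det2_trans (normp (h i))); first exact: Pn_nz (normp_Pn _).
    exact: det2_normp.
  by rewrite e; apply: det2_normp.
have -> : Uset h = Pn :\: im.
  apply/setP => p; have [pP|pP] := boolP (p \in Pn); last first.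
    by rewrite !inE; rewrite inE in pP; rewrite (negbTE pP) !andbF.
  have pP' := pP; rewrite inE in pP'; rewrite !inE pP' !andbT; apply/forallP/negP.
    move=> H /imsetP [i _ ep]; have := H i; rewrite ep det2_normp //.
    by rewrite eqxx.
  move=> H i; apply/negP => /eqP e; apply: H; apply/imsetP; exists i => //.
  exact: Pn_uniq.
rewrite cardsD card_Pn (setIidPr _) ?him //.
by apply/subsetP => x /imsetP [i _ ->]; apply: normp_Pn.
Qed.

Lemma Pn_indep p r : p \in Pn -> r \in Pn -> p != r -> det2 p r != 0.
Proof.
move=> pP rP; apply: contraNN => /eqP e; apply/eqP.
rewrite (Pn_uniq pP (Pn_nz rP) e); symmetry; exact: Pn_uniq rP (Pn_nz rP) (det2uu r).
Qed.

Lemma pick_A (U1 U2 : {set F * F}) : U1 \subset Pn -> U2 \subset Pn ->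
  #|U1| = #|U2| -> (#|U1| <= 2)%N ->
  exists A, detA A != 0 /\
    forall u', u' \in U2 -> exists2 u, u \in U1 & det2 (mapA A u) u' = 0.
Proof.
move=> /subsetP s1 /subsetP s2 e12.
case: (ltngtP #|U1| 1) => [lt1 _|gt1 le2|eq1 _].
- have e0 : #|U2| = 0%N by rewrite -e12; case: #|U1| lt1.
  exists (1, 0, 0, 1); split; first by rewrite /detA /= !mulr1 mulr0 subr0 oner_eq0.
  by move=> u'; rewrite (cards0_eq e0) inE.
- have e2 : #|U1| == 2 by rewrite eqn_leq le2.
  have e2' : #|U2| == 2 by rewrite -e12.
  case/cards2P: e2 => p [r [npr eU1]].
  case/cards2P: e2' => p' [r' [npr' eU2]].
  rewrite {}eU1 in s1 *; rewrite {}eU2 in s2 *.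
  have [pP rP] : p \in Pn /\ r \in Pn by split; apply: s1; rewrite !inE eqxx ?orbT.
  have [pP' rP'] : p' \in Pn /\ r' \in Pn by split; apply: s2; rewrite !inE eqxx ?orbT.
  have [A [hA ep er]] := mapA_two (Pn_indep pP rP npr) (Pn_indep pP' rP' npr').
  exists A; split => // u'; rewrite !inE => /orP[] /eqP ->.
    by exists p; rewrite ?inE ?eqxx // ep det2uu.
  by exists r; rewrite ?inE ?eqxx ?orbT // er det2uu.
- have e1 : #|U1| == 1 by rewrite eq1.
  have e1' : #|U2| == 1 by rewrite -e12 eq1.
  case/cards1P: e1 => p ep1; case/cards1P: e1' => p' ep2.
  have pP : p \in Pn by apply: s1; rewrite ep1 inE.
  have pP' : p' \in Pn by apply: s2; rewrite ep2 inE.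
  have [r hr] := complete (Pn_nz pP).
  have [r' hr'] := complete (Pn_nz pP').
  have [A [hA ep er]] := mapA_two hr hr'.
  exists A; split => // u'; rewrite ep2 inE => /eqP ->.
  by exists p; rewrite ?ep1 ?inE // ep det2uu.
Qed.

Lemma Uset_sub n (h : 'I_n -> F * F) : Uset h \subset Pn.
Proof. by apply/subsetP => x; rewrite inE => /andP[]. Qed.

Lemma match_h n (h1 h2 : 'I_n -> F * F) : indep h1 -> indep h2 ->
  (#|F|.+1 - n <= 2)%N ->
  exists A (s : {perm 'I_n}) (lam : 'I_n -> F),
    [/\ detA A != 0, forall i, lam i != 0 &
     forall i, h2 i = (lam i * (mapA A (h1 (s i))).1, lam i * (mapA A (h1 (s i))).2)].
Proof.
move=> i1 i2 hle; have [h1nz h1ind] := i1; have [h2nz h2ind] := i2.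
have c12 : #|Uset h1| = #|Uset h2| by rewrite (card_U i1) (card_U i2).
have c1 : (#|Uset h1| <= 2)%N by rewrite (card_U i1).
have [A [hA HA]] := pick_A (Uset_sub h1) (Uset_sub h2) c12 c1.
have key : forall j, exists i, det2 (mapA A (h1 j)) (h2 i) == 0.
  move=> j; case: (boolP [exists i, det2 (mapA A (h1 j)) (h2 i) == 0]) => [/existsP //|/existsPn H].
  exfalso; set v := mapA A (h1 j).
  have vnz : v != (0,0) := mapA_nz hA (h1nz j).
  have p'U : normp v \in Uset h2.
    rewrite inE normp_Pn /=; apply/forallP => i; apply/eqP => e.
    have := H i; rewrite (det2_trans (Pn_nz (normp_Pn v)) (det2_normp vnz) e).
    by rewrite eqxx.
  have [u uU hu] := HA _ p'U.
  have : det2 (mapA A u) v = 0.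
    apply: (det2_trans (Pn_nz (normp_Pn v))); last exact: det2_normp.
    by rewrite det2C hu oppr0.
  rewrite det2_mapA => /eqP; rewrite mulf_eq0 (negbTE hA) /= => /eqP e.
  move: uU; rewrite inE => /andP[_ /forallP /(_ j)].
  by rewrite e eqxx.
pose g j := odflt j [pick i | det2 (mapA A (h1 j)) (h2 i) == 0].
have hg : forall j, det2 (mapA A (h1 j)) (h2 (g j)) = 0.
  move=> j; rewrite /g; case: pickP => [i /eqP //| H]; exfalso.
  by have [i hi] := key j; have := H i; rewrite hi.
have ginj : injective g.
  move=> j j' e; apply/eqP; apply: contraTT isT => njj.
  have := h1ind _ _ njj; apply: contraNN => _.
  have : det2 (mapA A (h1 j)) (mapA A (h1 j')) = 0.
    apply: (det2_trans (h2nz (g j))); first by rewrite det2C hg oppr0.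
    by rewrite e det2C hg oppr0.
  by rewrite det2_mapA => /eqP; rewrite mulf_eq0 (negbTE hA) /=.
pose t := perm ginj.
have hts : forall i, g (t^-1%g i) = i.
  move=> i; have := permKV t i; rewrite permE => ->. done.
pose lam i := let x := mapA A (h1 (t^-1%g i)) in
  if x.1 != 0 then (h2 i).1 / x.1 else (h2 i).2 / x.2.
have heq : forall i, h2 i = (lam i * (mapA A (h1 (t^-1%g i))).1,
                             lam i * (mapA A (h1 (t^-1%g i))).2).
  move=> i; apply: prop_of_dep; first exact: mapA_nz hA (h1nz _).
  by have := hg (t^-1%g i); rewrite hts.
exists A, t^-1%g, lam; split => // i.
apply: contra (h2nz i) => /eqP l0; apply/eqP; rewrite (heq i) l0 !mul0r.
by [].
Qed.
End Pairs.

Section Equiv.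
Set Implicit Arguments. Unset Strict Implicit.
Variable F : finFieldType.

Definition codeH n (h : 'I_n -> F * F) : {set 'rV[F]_n} :=
  [set w : 'rV[F]_n | (\sum_i w 0 i * (h i).1 == 0) && (\sum_i w 0 i * (h i).2 == 0)].

Lemma mapA_eq0 (A : F * F * F * F) v : detA A != 0 -> mapA A v = (0,0) -> v = (0,0).
Proof. by move=> hA e; apply/eqP; apply: contraTT isT => nz; have := mapA_nz hA nz; rewrite e eqxx. Qed.

Lemma sums_transform n (h1 h2 : 'I_n -> F * F) A (s : 'S_n) lam :
  (forall i, lam i != 0) ->
  (forall i, h2 i = (lam i * (mapA A (h1 (s i))).1, lam i * (mapA A (h1 (s i))).2)) ->
  forall x : 'rV[F]_n,
  let y := \row_i ((lam i)^-1 * x 0 (s i)) in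
  (\sum_i y 0 i * (h2 i).1, \sum_i y 0 i * (h2 i).2) =
  mapA A (\sum_j x 0 j * (h1 j).1, \sum_j x 0 j * (h1 j).2).
Proof.
move=> hl hh x y; case: A hh => [[[a b] c] d] hh; rewrite /mapA /=.
have R : forall k : F * F -> F, \sum_j x 0 j * k (h1 j) = \sum_i x 0 (s i) * k (h1 (s i)).
  by move=> k; apply: (reindex_inj (@perm_inj _ s)).
have E1 : forall i, y 0 i * (h2 i).1 = a * (x 0 (s i) * (h1 (s i)).1) + c * (x 0 (s i) * (h1 (s i)).2).
  by move=> i; rewrite hh mxE /=; field; apply: hl.
have E2 : forall i, y 0 i * (h2 i).2 = b * (x 0 (s i) * (h1 (s i)).1) + d * (x 0 (s i) * (h1 (s i)).2).
  by move=> i; rewrite hh mxE /=; field; apply: hl.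
rewrite (eq_bigr _ (fun i _ => E1 i)) (eq_bigr _ (fun i _ => E2 i)).
rewrite (R (fun p => p.1)) (R (fun p => p.2)) !big_split /= -!mulr_sumr.
by [].
Qed.

Lemma equiv_codeH n (h1 h2 : 'I_n -> F * F) A (s : 'S_n) lam :
  detA A != 0 -> (forall i, lam i != 0) ->
  (forall i, h2 i = (lam i * (mapA A (h1 (s i))).1, lam i * (mapA A (h1 (s i))).2)) ->
  code_equiv (codeH h1) (codeH h2).
Proof.
move=> hA hl hh.
have hli : forall i, (lam i)^-1 != 0 by move=> i; rewrite invr_eq0.
exists s, (fun i => perm (mulfI (hli i))).
have ST := sums_transform hl hh.
apply/setP => w; apply/idP/imsetP.
- rewrite inE => /andP[/eqP e1 /eqP e2].
  pose x := \row_j (lam (s^-1%g j) * w 0 (s^-1%g j)).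
  have yw : \row_i ((lam i)^-1 * x 0 (s i)) = w.
    apply/rowP => i; rewrite !mxE permK mulrA mulVf ?mul1r //.
  have := ST x; rewrite /= yw e1 e2 => /esym /(mapA_eq0 hA) [f1 f2].
  exists x; first by rewrite inE f1 f2 eqxx.
  by rewrite -[LHS]yw; apply/rowP => i; rewrite !mxE permE.
- move=> [x]; rewrite inE => /andP[/eqP e1 /eqP e2] ->.
  have -> : \row_i (perm (mulfI (hli i))) (x 0 (s i)) = \row_i ((lam i)^-1 * x 0 (s i)).
    by apply/rowP => i; rewrite !mxE permE.
  rewrite inE; have := ST x; rewrite /= e1 e2 /mapA !mulr0 addr0 => -[-> ->].
  by rewrite eqxx.
Qed.
End Equiv.

Section Structure.
Set Implicit Arguments. Unset Strict Implicit.
Variable F : finFieldType.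
Variable k : nat.
Variable C : {set 'rV[F]_(k.+2)}.
Hypothesis hlin : linear_code C.
Hypothesis hcard : #|C| = (#|F| ^ k)%N.
Hypothesis hdist : forall x y, x \in C -> y \in C -> x != y -> (3 <= hamming x y)%N.

Lemma small_eq x y i j : x \in C -> y \in C ->
  (forall l, l != i -> l != j -> x 0 l = y 0 l) -> x = y.
Proof.
move=> xC yC H; apply/eqP; apply: contraTT isT => nxy.
have := hdist xC yC nxy; rewrite /hamming.
have : [set l | x 0 l != y 0 l] \subset [set i; j].
  apply/subsetP => l; rewrite !inE; apply: contraNT.
  by rewrite negb_or => /andP[li lj]; rewrite H ?eqxx.
move/subset_leq_card; rewrite cards2 => h1 h2.
by have := leq_trans h2 h1; case: (i != j).
Qed.

Definition a0 : 'I_(k.+2) := Ordinal (leqnSn k.+1 : (k < k.+2)%N).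
Definition a1 : 'I_(k.+2) := ord_max.

Lemma ord_cases (l : 'I_(k.+2)) : (l < k)%N \/ l = a0 \/ l = a1.
Proof.
case: (ltnP l k) => hl; [by left|right].
have : (l <= k.+1)%N by rewrite -ltnS.
rewrite leq_eqVlt ltnS => /orP[/eqP e|h]; [right|left]; apply: val_inj => //=.
by apply/eqP; rewrite eqn_leq h hl.
Qed.

Definition phi (x : 'rV[F]_(k.+2)) : 'rV[F]_k :=
  \row_(j < k) x 0 (widen_ord (leqW (leqnSn k)) j).

Lemma agree_eq x y : x \in C -> y \in C ->
  (forall l : 'I_(k.+2), (l < k)%N -> x 0 l = y 0 l) -> x = y.
Proof.
move=> xC yC H; apply: (small_eq (i := a0) (j := a1)) => // l la0 la1.
case: (ord_cases l) => [hl|[e|e]]; first exact: H.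
  by rewrite e eqxx in la0.
by rewrite e eqxx in la1.
Qed.

Lemma phi_surj z : exists2 c, c \in C & phi c = z.
Proof.
have inj : {in C &, injective phi}.
  move=> x y xC yC e; apply: agree_eq => // l hl.
  have := congr1 (fun v : 'rV[F]_k => v 0 (Ordinal hl)) e; rewrite /= !mxE.
  by have -> : widen_ord (leqW (leqnSn k)) (Ordinal hl) = l by apply: val_inj.
have : phi @: C = setT.
  apply/eqP; rewrite eqEcard subsetT /= card_in_imset // hcard cardsT card_mx mul1n.
  by [].
by move/setP/(_ z); rewrite inE => /imsetP [c cC ->]; exists c.
Qed.


Definition cw (z : 'rV[F]_k) : 'rV[F]_(k.+2) := odflt 0 [pick c in C | phi c == z].

Lemma cwP z : cw z \in C /\ phi (cw z) = z.
Proof.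
rewrite /cw; case: pickP => [c /andP[cC /eqP e] //|H].
have [c cC e] := phi_surj z; have := H c; by rewrite cC e eqxx.
Qed.

Definition ek (j : 'I_(k.+2)) : 'rV[F]_k := \row_(l < k) (if (l : nat) == j then 1 else 0).
Definition dd j := cw (ek j).
Definition hh (j : 'I_(k.+2)) : F * F :=
  if (j < k)%N then ((dd j) 0 a0, (dd j) 0 a1)
  else if j == a0 then (-1, 0) else (0, -1).

Lemma dd_low j (l : 'I_(k.+2)) : (l < k)%N -> (dd j) 0 l = if (l : nat) == j then 1 else 0.
Proof.
move=> hl; have := congr1 (fun v : 'rV[F]_k => v 0 (Ordinal hl)) (cwP (ek j)).2.
rewrite /= !mxE.
by have -> : widen_ord (leqW (leqnSn k)) (Ordinal hl) = l by apply: val_inj.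
Qed.

Lemma sumC (I : finType) (P : pred I) (f : I -> 'rV[F]_(k.+2)) :
  (forall i, f i \in C) -> \sum_(i | P i) f i \in C.
Proof.
case: hlin => h0 hD _ hf.
by apply: (big_ind (fun x => x \in C)) => // x y; apply: hD.
Qed.

Definition uu (w : 'rV[F]_(k.+2)) := \sum_(j : 'I_(k.+2) | (j < k)%N) (w 0 j) *: dd j.

Lemma uuC w : uu w \in C.
Proof.
apply: sumC => j; case: hlin => _ _ hZ; apply: hZ; exact: (cwP _).1.
Qed.

Lemma uu_coord w l : (uu w) 0 l = \sum_(j : 'I_(k.+2) | (j < k)%N) w 0 j * (dd j) 0 l.
Proof. by rewrite /uu summxE; apply: eq_bigr => j _; rewrite mxE. Qed.

Lemma uu_low w (l : 'I_(k.+2)) : (l < k)%N -> (uu w) 0 l = w 0 l.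
Proof.
move=> hl; rewrite uu_coord.
rewrite (eq_bigr (fun j => w 0 j * (if (l : nat) == j then 1 else 0))); last first.
  by move=> j _; rewrite dd_low.
rewrite (bigD1 l) //= eqxx mulr1 big1 ?addr0 // => j /andP[_ jl].
by case: eqP => [/val_inj e|]; [rewrite e eqxx in jl | rewrite mulr0].
Qed.

Lemma a1_neq_a0 : a1 != a0.
Proof. by apply/negP => /eqP/(congr1 val) /= /esym /n_Sn. Qed.

Lemma sum_hh (w : 'rV[F]_(k.+2)) (f : F * F -> F) :
  \sum_i w 0 i * f (hh i) =
  \sum_(j : 'I_(k.+2) | (j < k)%N) w 0 j * f ((dd j) 0 a0, (dd j) 0 a1)
  + (w 0 a0 * f ((-1, 0) : F * F) + w 0 a1 * f ((0, -1) : F * F)).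
Proof.
rewrite (bigID (fun i : 'I_(k.+2) => (i < k)%N)) /=; congr (_ + _).
  by apply: eq_bigr => j hj; rewrite /hh hj.
rewrite (bigD1 a0) /=; last by rewrite ltnn.
rewrite (bigD1 a1) /=; last first.
  by rewrite a1_neq_a0 andbT -leqNgt leqW.
rewrite big1 ?addr0.
  by rewrite /hh /= ltnn eqxx ltnNge leqW //= (negbTE a1_neq_a0).
move=> j /andP[/andP[hj ja0] ja1].
case: (ord_cases j) => [h|[e|e]]; [by rewrite h in hj| by rewrite e eqxx in ja0|].
by rewrite e eqxx in ja1.
Qed.


Lemma C_eq : C = codeH hh.
Proof.
apply/setP => w; rewrite inE !sum_hh /= !mulrN1 !mulr0 addr0 add0r !subr_eq0 -!uu_coord.
apply/idP/idP.
  move=> wC; have e := agree_eq (uuC w) wC (fun l hl => uu_low w hl).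
  by rewrite e !eqxx.
case/andP => /eqP e0 /eqP e1.
have -> : w = uu w.
  apply/rowP => l; case: (ord_cases l) => [hl|[->|->]]; [|by rewrite e0|by rewrite e1].
  by rewrite uu_low.
exact: uuC.
Qed.

Lemma sum_spike (g : 'I_(k.+2) -> F) (al : F) i :
  \sum_l al * (l == i)%:R * g l = al * g i.
Proof.
rewrite (bigD1 i) //= eqxx mulr1 big1 ?addr0 // => l li.
by rewrite (negbTE li) mulr0 mul0r.
Qed.

Definition spike2 (al be : F) i j : 'rV[F]_(k.+2) :=
  \row_l (al * (l == i)%:R + be * (l == j)%:R).

Lemma sum_spike2 (g : 'I_(k.+2) -> F) al be i j :
  \sum_l (spike2 al be i j) 0 l * g l = al * g i + be * g j.
Proof.
rewrite (eq_bigr (fun l => al * (l == i)%:R * g l + be * (l == j)%:R * g l)).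
  by rewrite big_split /= !sum_spike.
by move=> l _; rewrite mxE mulrDl.
Qed.

Lemma no_small w i j : w \in C -> w != 0 ->
  (forall l, l != i -> l != j -> w 0 l = 0) -> False.
Proof.
move=> wC nz H; case: hlin => h0 _ _.
have H' : forall l, l != i -> l != j -> w 0 l = (0 : 'rV[F]_(k.+2)) 0 l.
  by move=> l li lj; rewrite mxE; apply: H.
by have e := small_eq wC h0 H'; rewrite e eqxx in nz.
Qed.

Lemma spike2_inC al be i j : al * (hh i).1 + be * (hh j).1 = 0 ->
  al * (hh i).2 + be * (hh j).2 = 0 -> spike2 al be i j \in C.
Proof.
move=> e1 e2; rewrite C_eq inE.
rewrite (sum_spike2 (fun l => (hh l).1)) (sum_spike2 (fun l => (hh l).2)).
by rewrite e1 e2 eqxx.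
Qed.

Lemma spike2_supp al be i j l : l != i -> l != j -> (spike2 al be i j) 0 l = 0.
Proof. by move=> li lj; rewrite mxE (negbTE li) (negbTE lj) !mulr0 addr0. Qed.

Lemma hh_indep : indep hh.
Proof.
have hnz : forall i, hh i != (0,0).
  move=> i; apply/negP => /eqP e.
  have wC : spike2 1 0 i i \in C by apply: spike2_inC; rewrite e /= !mulr0 addr0.
  apply: (no_small wC) (@spike2_supp 1 0 i i).
  apply/negP => /eqP /rowP /(_ i); rewrite !mxE eqxx mul0r addr0 mul1r => /eqP.
  by rewrite oner_eq0.
split => // i j nij; apply/negP => /eqP e.
have := prop_of_dep (hnz i) e.
set mu := (if _ then _ else _) => ej.
have wC : spike2 mu (-1) i j \in C.
  by apply: spike2_inC; rewrite ej /=; ring.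
apply: (no_small wC) (@spike2_supp mu (-1) i j).
apply/negP => /eqP /rowP /(_ j); rewrite !mxE eqxx eq_sym (negbTE nij) mulr0 add0r mulr1 => /eqP.
by rewrite oppr_eq0 oner_eq0.
Qed.

End Structure.

Theorem lemma5 (F : finFieldType) (q n : nat) (hq : #|F| = q)
  (hn : n = q.-1 \/ n = q \/ n = q.+1)
  (C1 C2 : {set 'rV[F]_n}) :
  linear_code C1 -> is_code C1 (q ^ (n - 2)) 3 ->
  linear_code C2 -> is_code C2 (q ^ (n - 2)) 3 ->
  code_equiv C1 C2.
Proof.
move: hn C1 C2; case: n => [|[|k]] hn C1 C2 l1 [c1 [[x [y [xC yC nxy _]]] d1]] l2 [c2 [_ d2]].
- exfalso; move: c1; rewrite expn0 => /eqP /cards1P [z ez].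
  by move: xC yC nxy; rewrite ez !inE => /eqP -> /eqP ->; rewrite eqxx.
- exfalso; move: c1; rewrite expn0 => /eqP /cards1P [z ez].
  by move: xC yC nxy; rewrite ez !inE => /eqP -> /eqP ->; rewrite eqxx.
have ek : (k.+2 - 2 = k)%N by lia.
rewrite ek -hq in c1 c2.
rewrite (C_eq l1 c1 d1) (C_eq l2 c2 d2).
have hle : (#|F|.+1 - k.+2 <= 2)%N.
  rewrite hq; case: hn => [->|[->|->]]; lia.
have [A [s [lam [hA hl hh']]]] := match_h (hh_indep l1 c1 d1) (hh_indep l2 c2 d2) hle.
exact: equiv_codeH hA hl hh'.
Qed.
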